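(* Any invertible matrix $B\in GL(n,\mathbb{C})$ can be written as a product $B=C_1C_2$ of two invertible diagonalizable matrices $C_1$ and $C_2$ with distinct eigenvalues. One of the $C_i$ may be chosen in a Zariski open set. *)

(* Defs.v *)
From mathcomp Require Import all_boot all_order all_algebra.
From mathcomp Require Import reals.
From mathcomp.real_closed Require Import complex.
From mathcomp Require Import mpoly.
Set Implicit Arguments.
Unset Strict Implicit.
Unset Printing Implicit Defensive.
Import GRing.Theory Num.Theory.
Local Open Scope ring_scope.

Definition distinct_eigenvalues (F : fieldType) (n : nat) (A : 'M[F]_n) : Prop :=
  exists s : seq F, [/\ size s = n, uniq s & all (eigenvalue A) s].

Definition inv_diag_distinct (F : fieldType) (n : nat) (A : 'M[F]_n) : Prop :=
  [/\ A \in unitmx, diagonalizable A & distinct_eigenvalues A].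

(* Evaluation of a polynomial in the n*n matrix entries at a matrix C
   (variables indexed by the entries of mxvec C). *)
Definition mx_eval (F : fieldType) (n : nat) (P : {mpoly F[n * n]})
  (C : 'M[F]_n) : F :=
  mpoly.meval (fun i => mxvec C 0 i) P.

Definition in_zariski_basic_open (F : fieldType) (n : nat)
  (P : {mpoly F[n * n]}) (C : 'M[F]_n) : Prop :=
  mx_eval P C != 0.

(* Main.v *)
Require Import Defs.
From mathcomp Require Import all_boot all_order all_algebra all_field.
From mathcomp Require Import reals.
From mathcomp.real_closed Require Import complex.
From mathcomp Require Import mpoly.
Set Implicit Arguments.
Unset Strict Implicit.
Unset Printing Implicit Defensive.
Import GRing.Theory Num.Theory.
Local Open Scope ring_scope.

Lemma map_resultant' (aR rR : nzRingType) (f : {rmorphism aR -> rR}) (p q : {poly aR}) :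
  size (map_poly f p) = size p -> size (map_poly f q) = size q ->
  f (resultant p q) = resultant (map_poly f p) (map_poly f q).
Proof.
move=> Hp Hq; rewrite /resultant /Sylvester_mx Hp Hq.
rewrite -det_map_mx /= map_col_mx; congr (\det (col_mx _ _));
  by apply: map_lin1_mx => v; rewrite map_poly_rV rmorphM /= map_rVpoly.
Qed.

Lemma size_char_deriv (S : comNzRingType) n (A : 'M[S]_n.+1) :
  (n.+1%:R : S) != 0 -> size (char_poly A)^`() = n.+1.
Proof.
move=> Hn; apply/anti_leq/andP; split.
  have := lt_size_deriv (p := char_poly A).
  rewrite size_char_poly; apply.
  by rewrite -size_poly_eq0 size_char_poly.
rewrite leqNgt ltnS; apply/negP => Hs.
move: Hn; have := nth_default 0 Hs; rewrite coef_deriv.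
have := char_poly_monic A; rewrite monicE /lead_coef size_char_poly /= => /eqP ->.
by move=> ->; rewrite eqxx.
Qed.

Lemma charp_prod (F : fieldType) n (A : 'M[F]_n) s :
  size s = n -> uniq s -> all (eigenvalue A) s ->
  char_poly A = \prod_(z <- s) ('X - z%:P).
Proof.
move=> Hs Hu Ha.
have Hr : all (root (char_poly A)) s.
  by apply/allP => x /(allP Ha); rewrite eigenvalue_root_char.
rewrite {1}(all_roots_prod_XsubC _ Hr) ?uniq_rootsE //; last by rewrite size_char_poly Hs.
by rewrite (monicP (char_poly_monic A)) scale1r.
Qed.

Lemma distinct_diag (F : fieldType) n (A : 'M[F]_n) :
  distinct_eigenvalues A -> diagonalizable A.
Proof.
case: n A => [|m] A [s [Hs Hu Ha]].
  have -> : A = 0 by apply/matrixP => -[].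
  exact: diagonalizable0.
apply/diagonalizableP; exists s => //.
by rewrite -(charp_prod Hs Hu Ha) mxminpoly_dvd_char.
Qed.

Lemma disc_distinct (F : closedFieldType) n (A : 'M[F]_n) :
  resultant (char_poly A) (char_poly A)^`() != 0 -> distinct_eigenvalues A.
Proof.
move=> Hres; have [r Hr] := closed_field_poly_normal (char_poly A).
rewrite (monicP (char_poly_monic A)) scale1r in Hr.
exists r; split.
- by apply/eqP; rewrite -eqSS -(size_char_poly A) Hr size_prod_XsubC.
- rewrite -separable_prod_XsubC -Hr unlock coprimep_def.
  move: Hres; rewrite resultant_eq0 -leqNgt => Hg.
  rewrite eqn_leq Hg /= size_poly_gt0 gcdp_eq0 negb_and.
  by rewrite -size_poly_gt0 (size_char_poly A).
- by apply/allP => x xr; rewrite eigenvalue_root_char Hr root_prod_XsubC.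
Qed.

Lemma distinct_disc (F : fieldType) n (A : 'M[F]_n) :
  distinct_eigenvalues A -> resultant (char_poly A) (char_poly A)^`() != 0.
Proof.
move=> [s [Hs Hu Ha]]; rewrite resultant_eq0 -leqNgt.
have := Hu; rewrite -separable_prod_XsubC -(charp_prod Hs Hu Ha).
by rewrite unlock coprimep_def => /eqP ->.
Qed.

Lemma distinct_scale (F : fieldType) n (A : 'M[F]_n) c :
  c != 0 -> distinct_eigenvalues A -> distinct_eigenvalues (c *: A).
Proof.
move=> Hc [s [Hs Hu Ha]]; exists (map ( *%R c) s); split.
- by rewrite size_map.
- by rewrite map_inj_uniq //; apply: mulfI.
- apply/allP => _ /mapP [x xs ->].
  have /eigenvalueP [v Hv v0] := allP Ha x xs.
  apply/eigenvalueP; exists v => //.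
  by rewrite -scalemxAr Hv scalerA.
Qed.

Definition disc (S : comNzRingType) (p : {poly S}) := resultant p p^`().
Definition badf (S : comNzRingType) n (B X : 'M[S]_n) : S :=
  \det X * disc (char_poly X) * disc (char_poly (\adj X *m B)).

Lemma map_disc (S T : comNzRingType) (f : {rmorphism S -> T}) n (A : 'M[S]_n.+1) :
  (n.+1%:R : T) != 0 -> f (disc (char_poly A)) = disc (char_poly (map_mx f A)).
Proof.
move=> HT; have HS : (n.+1%:R : S) != 0.
  by apply: contraNneq HT => H; rewrite -(rmorph_nat f) H rmorph0.
rewrite /disc map_resultant'.
- by rewrite -deriv_map map_char_poly.
- by rewrite map_char_poly !size_char_poly.
- by rewrite -deriv_map map_char_poly !size_char_deriv.
Qed.

Lemma map_badf (S T : comNzRingType) (f : {rmorphism S -> T}) n (B X : 'M[S]_n.+1) :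
  (n.+1%:R : T) != 0 -> f (badf B X) = badf (map_mx f B) (map_mx f X).
Proof.
move=> HT; rewrite /badf !rmorphM /= det_map_mx !map_disc //.
by rewrite map_mxM map_mx_adj.
Qed.

Lemma good (F : closedFieldType) n (B C : 'M[F]_n) : B \in unitmx ->
  badf B C != 0 -> inv_diag_distinct C /\ inv_diag_distinct (invmx C *m B).
Proof.
move=> BU; rewrite /badf !mulf_eq0 !negb_or => /andP[/andP[dC dC1] dC2].
have CU : C \in unitmx by rewrite unitmxE unitfE.
have H1 := disc_distinct dC1.
have H2 : distinct_eigenvalues (invmx C *m B).
  rewrite /invmx CU -scalemxAl; apply: distinct_scale; first by rewrite invr_neq0.
  exact: disc_distinct.
split; split => //; try exact: distinct_diag.
by rewrite unitmx_mul unitmx_inv CU.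
Qed.

Lemma poly_nonroot (F : numFieldType) (p : {poly F}) : p != 0 -> exists t, ~~ root p t.
Proof.
move=> p0; have := max_poly_roots p0 (rs := [seq k%:R | k <- iota 0 (size p)]).
rewrite size_map size_iota ltnn => H.
have /allPn [t _ Ht] : ~~ all (root p) [seq k%:R | k <- iota 0 (size p)].
  apply/negP => Ha; have Hu : uniq [seq (k%:R : F) | k <- iota 0 (size p)].
    rewrite map_inj_uniq ?iota_uniq //.
    by move=> a b /eqP; rewrite eqr_nat => /eqP.
  by have := H Ha Hu.
by exists t.
Qed.

Lemma diag_distinct (F : numFieldType) n :
  distinct_eigenvalues (diag_mx (\row_(i < n) (i.+1)%:R : 'rV[F]_n)).
Proof.
exists [seq (k.+1)%:R | k <- iota 0 n]; split.
- by rewrite size_map size_iota.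
- rewrite map_inj_uniq ?iota_uniq // => a b /eqP; rewrite eqr_nat eqSS => /eqP.
  done.
- apply/allP => x /mapP [k]; rewrite mem_iota add0n => /andP[_ kn] ->.
  apply/eigenvalueP; exists (delta_mx 0 (Ordinal kn)).
  + by rewrite -rowE row_diag_mx mxE.
  + apply/negP => /eqP/matrixP/(_ 0 (Ordinal kn)); rewrite !mxE !eqxx /=.
    by apply/eqP; exact: oner_neq0.
Qed.

Lemma nz_of_eval (F : fieldType) (Y : {poly F}) t : Y.[t] != 0 -> Y != 0.
Proof. by apply: contraNneq => ->; rewrite horner0. Qed.

Lemma main_succ (F : numClosedFieldType) m (B : 'M[F]_m.+1) : B \in unitmx ->
  (exists C1 C2 : 'M[F]_m.+1,
      [/\ B = C1 *m C2, inv_diag_distinct C1 & inv_diag_distinct C2]) /\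
  (exists P : {mpoly F[m.+1 * m.+1]},
      P != 0 /\
      forall C1 : 'M[F]_m.+1, in_zariski_basic_open P C1 ->
        exists C2 : 'M[F]_m.+1,
          [/\ B = C1 *m C2, inv_diag_distinct C1 & inv_diag_distinct C2]).
Proof.
move=> BU.
have Hn : (m.+1%:R : F) != 0 by rewrite pnatr_eq0.
have key : forall C : 'M[F]_m.+1, badf B C != 0 -> exists C2 : 'M[F]_m.+1,
    [/\ B = C *m C2, inv_diag_distinct C & inv_diag_distinct C2].
  move=> C /(good BU) [H1 H2]; exists (invmx C *m B); split => //.
  by case: H1 => CU _ _; rewrite mulmxA mulmxV // mul1mx.
pose D : 'M[F]_m.+1 := diag_mx (\row_(i < m.+1) (i.+1)%:R).
have DD : distinct_eigenvalues D := diag_distinct F m.+1.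
have DU : D \in unitmx.
  rewrite unitmxE unitfE det_diag; apply/prodf_neq0 => i _.
  by rewrite mxE pnatr_eq0.
pose A0 := B *m invmx D.
have A0U : A0 \in unitmx by rewrite unitmx_mul BU unitmx_inv DU.
have dA0 : \det A0 != 0 by rewrite -unitfE -unitmxE.
have HA0 : \adj A0 *m B = \det A0 *: D.
  have E : invmx A0 = (\det A0)^-1 *: \adj A0 by rewrite /invmx A0U.
  have -> : \adj A0 = \det A0 *: invmx A0 by rewrite E scalerA mulfV // scale1r.
  have EB : B = A0 *m D by rewrite /A0 -mulmxA mulVmx // mulmx1.
  by rewrite -scalemxAl EB mulKmx.
clearbody D A0.
pose X : 'M[{poly F}]_m.+1 := map_mx polyC A0 + 'X *: map_mx polyC (D - A0).
have evX : forall t, map_mx (horner_eval t) X = A0 + t *: (D - A0).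
  move=> t; apply/matrixP => i j; rewrite !mxE /horner_eval.
  by rewrite hornerD hornerM hornerX !hornerC.
have evB : forall t, map_mx (horner_eval t) (map_mx polyC B) = B.
  by move=> t; apply/matrixP => i j; rewrite !mxE /horner_eval hornerC.
pose g := badf (map_mx polyC B) X.
have Hg : forall t, g.[t] = badf B (A0 + t *: (D - A0)).
  move=> t; have := map_badf (horner_eval t) (map_mx polyC B) X Hn.
  by rewrite evX evB /horner_eval.
have g0 : g != 0.
  rewrite /g /badf !mulf_neq0 //.
  - apply: (@nz_of_eval _ _ 1); rewrite -[_.[_]]/(horner_eval _ _) -det_map_mx evX.
    by rewrite scale1r addrC subrK -unitfE -unitmxE.
  - apply: (@nz_of_eval _ _ 1); rewrite -[_.[_]]/(horner_eval _ _) map_disc // evX.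
    by rewrite scale1r addrC subrK; apply: distinct_disc.
  - apply: (@nz_of_eval _ _ 0); rewrite -[_.[_]]/(horner_eval _ _) map_disc //.
    rewrite map_mxM map_mx_adj evX evB scale0r addr0 HA0.
    by apply: distinct_disc; apply: distinct_scale.
have [t Ht] := poly_nonroot g0.
have Hbad : badf B (A0 + t *: (D - A0)) != 0 by rewrite -Hg.
split; first by have [C2 HC] := key _ Hbad; exists (A0 + t *: (D - A0)), C2.
pose Xg : 'M[{mpoly F[m.+1 * m.+1]}]_m.+1 := \matrix_(i, j) 'X_(mxvec_index i j).
pose Bg : 'M[{mpoly F[m.+1 * m.+1]}]_m.+1 := map_mx (fun c => c%:MP) B.
have HP : forall C, mx_eval (badf Bg Xg) C = badf B C.
  move=> C; rewrite /mx_eval (map_badf (mpoly.meval (fun k => mxvec C 0 k))) //.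
  congr badf; apply/matrixP => i j; rewrite !mxE.
    exact: mpoly.mevalC.
  rewrite -mxvecE; exact: mpoly.mevalXU.
exists (badf Bg Xg); split.
  apply: contraNneq Hbad => H0; have := HP (A0 + t *: (D - A0)).
  by rewrite H0 /mx_eval mpoly.meval0 => <-.
by move=> C1; rewrite /in_zariski_basic_open HP; apply: key.
Qed.

Lemma idd0 (F : numFieldType) (C : 'M[F]_0) : inv_diag_distinct C.
Proof.
have dist : distinct_eigenvalues C by exists [::].
split => //; last exact: distinct_diag.
by rewrite unitmxE det_mx00 unitr1.
Qed.

Unset Implicit Arguments.

Theorem mainTheorem5 (R : realType) (n : nat) (B : 'M[R[i]]_n) :
  B \in unitmx ->
  (exists C1 C2 : 'M[R[i]]_n,
      [/\ B = C1 *m C2, inv_diag_distinct C1 & inv_diag_distinct C2]) /\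
  (exists P : {mpoly R[i][n * n]},
      P != 0 /\
      forall C1 : 'M[R[i]]_n, in_zariski_basic_open P C1 ->
        exists C2 : 'M[R[i]]_n,
          [/\ B = C1 *m C2, inv_diag_distinct C1 & inv_diag_distinct C2]).
Proof.
case: n B => [|m] B BU; last exact: main_succ.
have E : forall C1 C2 : 'M[R[i]]_0, C1 = C2 by move=> C1 C2; apply/matrixP => -[].
split.
  by exists B, B; split; [exact: E | exact: idd0 | exact: idd0].
exists 1; split; first exact: oner_neq0.
by move=> C1 _; exists C1; split; [exact: E | exact: idd0 | exact: idd0].
Qed.
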